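(* Let $\delta\in[0,1/2]$ satisfy $H(\delta)<1/3$. Then there exist arbitrarily long binary linear $3$-CIS codes of rate $1/3$ with relative minimum distance at least $\delta$; more precisely, for all sufficiently large $k$ there is a binary linear $3$-CIS $[3k,k]$ code of minimum distance at least $3\delta k$.
   Context: $H(x)=-x\log_2x-(1-x)\log_2(1-x)$ is the binary entropy function. A binary linear $[3k,k]$ code is $3$-CIS if its coordinate set can be partitioned into $3$ pairwise disjoint information sets, an information set being a set of $k$ coordinates whose columns in a generator matrix are linearly independent. *)

(* Defs.v *)
From Stdlib Require Import Reals.
From mathcomp Require Import all_boot all_order all_algebra.
Set Implicit Arguments. Unset Strict Implicit. Unset Printing Implicit Defensive.
Import GRing.Theory.

(* binary logarithm and binary entropy function (0 log 0 = 0 automatically,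
   since 0 * ln 0 = 0 regardless of the value of ln 0) *)
Local Open Scope R_scope.
Definition log2 (x : R) : R := ln x / ln 2.
Definition Hbin (x : R) : R := - x * log2 x - (1 - x) * log2 (1 - x).
Local Close Scope R_scope.

(* A binary linear [n,k] code is given by a generator matrix G : 'M['F_2]_(k,n)
   of full row rank k; the code is the row space of G. *)

Definition wt n (c : 'rV['F_2]_n) : nat := #|[set j : 'I_n | c ord0 j != 0%R]|.

(* S is an information set: k coordinates whose columns in G are
   linearly independent (no nontrivial vanishing combination of them). *)
Definition info_set k n (G : 'M['F_2]_(k, n)) (S : {set 'I_n}) : Prop :=
  #|S| = k /\
  forall v : 'cV['F_2]_n, (forall j, j \notin S -> v j ord0 = 0%R) ->
    (G *m v = 0)%R -> v = 0%R.

Definition cis3 k n (G : 'M['F_2]_(k, n)) : Prop :=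
  exists S1 S2 S3 : {set 'I_n},
    [/\ [disjoint S1 & S2], [disjoint S1 & S3], [disjoint S2 & S3],
        S1 :|: S2 :|: S3 = setT &
        [/\ info_set G S1, info_set G S2 & info_set G S3]].

Definition min_dist_ge k n (G : 'M['F_2]_(k, n)) (d : R) : Prop :=
  forall u : 'rV['F_2]_k, u != 0%R -> Rle d (INR (wt (u *m G))).

(* Main.v *)
Require Import Defs.
From Stdlib Require Import Reals Lra.
From mathcomp Require Import all_boot all_order all_algebra.
From mathcomp Require Import Rstruct.
From mathcomp Require Import zify.
Set Implicit Arguments. Unset Strict Implicit. Unset Printing Implicit Defensive.
Import Order.TTheory GRing.Theory Num.Theory.

Section Real1.
Local Open Scope R_scope.
Lemma key1 (d : R) (k : nat) : 0 < d -> d <= 1/2 -> Hbin d < 1/3 -> (0 < k)%nat ->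
  (1 + d / (1 - d)) ^ (3 * k) < 2 ^ k * exp (3 * d * INR k * ln (d / (1 - d))).
Proof.
intros h0 h1 hH hk.
assert (hd1 : 0 < 1 - d) by lra.
set (r := d / (1 - d)).
assert (hr : 0 < r) by (unfold r; apply Rdiv_lt_0_compat; lra).
assert (e1 : 1 + r = / (1 - d)) by (unfold r; field; lra).
assert (lnr : ln r = ln d - ln (1 - d)).
{ unfold r, Rdiv. rewrite ln_mult; try lra; try (apply Rinv_0_lt_compat; lra). rewrite ln_Rinv; lra. }
assert (ln1r : ln (1 + r) = - ln (1 - d)) by (rewrite e1 ln_Rinv; lra).
assert (l2 : / 2 < ln 2) by apply ln_lt_2.
assert (hH2 : Hbin d * ln 2 = - d * ln d - (1 - d) * ln (1 - d)).
{ unfold Hbin, log2. field. lra. }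
assert (A : 3 * ln (1 + r) < ln 2 + 3 * d * ln r).
{ rewrite ln1r lnr. assert (Hbin d * ln 2 < 1/3 * ln 2) by (apply Rmult_lt_compat_r; lra). nra. }
assert (hk' : 0 < INR k) by (apply lt_0_INR; apply/ssrnat.ltP; exact hk).
assert (B : INR (3 * k) * ln (1 + r) < INR k * ln 2 + 3 * d * INR k * ln r).
{ rewrite mult_INR. simpl (INR 3). nra. }
rewrite -(exp_ln ((1 + r) ^ (3 * k))); last by apply pow_lt; lra.
rewrite -(exp_ln (2 ^ k)); last by apply pow_lt; lra.
rewrite -exp_plus. apply exp_increasing.
rewrite !ln_pow; simpl (INR 2); lra.
Qed.
Definition lowf (d : R) (w : nat) : bool := if Rlt_dec (INR w) d then true else false.
End Real1.

Section Real2.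
Local Open Scope ring_scope.
Lemma wtE n (c : 'rV['F_2]_n) : wt c = (\sum_j (c ord0 j != 0%R : nat))%N.
Proof. by rewrite /wt -sum1dep_card big_mkcond. Qed.

Lemma sum_pow (R : comNzRingType) n (r : R) :
  \sum_(y : 'rV['F_2]_n) r ^+ wt y = (1 + r) ^+ n.
Proof.
pose w := fun b : 'F_2 => if b != 0 then r else 1.
have E1 : forall y : 'rV['F_2]_n, r ^+ wt y = \prod_j w (y ord0 j).
  move=> y; rewrite wtE (big_morph (fun m => r ^+ m) (exprD r) (expr0 r)).
  by apply: eq_bigr => j _; rewrite /w; case: (y ord0 j != 0) => /=; rewrite ?expr1 ?expr0.
rewrite (eq_bigr _ (fun y _ => E1 y)).
pose h := fun f : {ffun 'I_n -> 'F_2} => \row_j f j.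
rewrite (reindex h) /=; last first.
  apply: onW_bij; exists (fun y : 'rV['F_2]_n => [ffun j => y ord0 j]).
    by move=> f; apply/ffunP => j; rewrite ffunE /h mxE.
  by move=> y; apply/matrixP => i j; rewrite /h mxE ffunE (ord1 i).
rewrite (eq_bigr (fun f : {ffun 'I_n -> 'F_2} => \prod_j w (f j))); last first.
  by move=> f _; apply: eq_bigr => j _; rewrite /h mxE.
rewrite -(bigA_distr_bigA (fun (j : 'I_n) (b : 'F_2) => w b)) /= prodr_const card_ord.
congr (_ ^+ _).
rewrite (bigD1 0) //= /w eqxx /=.
rewrite (eq_bigr (fun _ => r)); last by move=> b ->.
by rewrite sumr_const cardC1 card_Fp.
Qed.

Lemma key2 (R : realFieldType) k (rho E : R) (low : nat -> bool) :
  0 < rho -> 0 <= E -> (forall w, low w -> E <= rho ^+ w) ->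
  ((\sum_(u : 'rV['F_2]_k) \sum_(y : 'rV['F_2]_k) \sum_(z : 'rV['F_2]_k)
     (low (wt u + wt y + wt z) : nat))%N)%:R * E <= ((1 + rho) ^+ k) ^+ 3.
Proof.
move=> r0 E0 HL.
have L : forall w, (low w : nat)%:R * E <= rho ^+ w.
  move=> w; case: (boolP (low w)) => h /=.
    by rewrite mul1r HL.
  by rewrite mul0r; apply: exprn_ge0; exact: ltW.
have -> : ((1 + rho) ^+ k) ^+ 3 =
   \sum_(u : 'rV['F_2]_k) \sum_(y : 'rV['F_2]_k) \sum_(z : 'rV['F_2]_k) rho ^+ (wt u + wt y + wt z).
  rewrite -sum_pow !exprS expr0 mulr1 big_distrl /=; apply: eq_bigr => u _.
  rewrite big_distrl /= big_distrr /=; apply: eq_bigr => y _.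
  rewrite mulrA big_distrr /=; apply: eq_bigr => z _.
  by rewrite !exprD.
rewrite natr_sum big_distrl /=; apply: ler_sum => u _.
rewrite natr_sum big_distrl /=; apply: ler_sum => y _.
rewrite natr_sum big_distrl /=; apply: ler_sum => z _.
exact: L.
Qed.

Lemma Tbound (d : R) k : Rle 0 d -> Rle d (Rdiv 1 2) -> Rlt (Hbin d) (Rdiv 1 3) -> (0 < k)%N ->
  (\sum_(u : 'rV['F_2]_k) \sum_(y : 'rV['F_2]_k) \sum_(z : 'rV['F_2]_k)
     (lowf (Rmult (Rmult 3 d) (INR k)) (wt u + wt y + wt z) : nat) < 2 ^ k)%N.
Proof.
move=> h0 h1 hH hk.
case: (Rle_lt_or_eq_dec _ _ h0) => [dpos | d0]; last first.
  subst d.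
  have Hl : forall w, lowf (Rmult (Rmult 3 0) (INR k)) w = false.
    move=> w; rewrite /lowf; case: Rlt_dec => // H; exfalso.
    have := pos_INR w; lra.
  rewrite big1 ?expn_gt0 // => u _; rewrite big1 // => y _; rewrite big1 // => z _.
  by rewrite Hl.
set rho := Rdiv d (Rminus 1 d).
have hr : Rlt 0 rho by rewrite /rho; apply: Rdiv_lt_0_compat; lra.
have lnr : Rle (ln rho) 0.
  have e : Rmult rho (Rminus 1 d) = d by rewrite /rho; field; lra.
  have : Rle rho 1 by nra.
  case/Rle_lt_or_eq_dec => [r1|->]; last by rewrite ln_1; lra.
  by rewrite -ln_1; apply: Rlt_le; apply: ln_increasing.
set E := exp (Rmult (Rmult (Rmult 3 d) (INR k)) (ln rho)).
have E0 : Rlt 0 E by apply: exp_pos.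
have K2 := @key2 R k rho E (lowf (Rmult (Rmult 3 d) (INR k))) (introT RltP hr) (ltW (introT RltP E0)).
have K1 := key1 dpos h1 hH hk.
rewrite -/rho -/E in K1.
have : ((\sum_(u : 'rV['F_2]_k) \sum_(y : 'rV['F_2]_k) \sum_(z : 'rV['F_2]_k)
     (lowf (Rmult (Rmult 3 d) (INR k)) (wt u + wt y + wt z) : nat))%N%:R * E <= ((1 + rho) ^+ k) ^+ 3)%R.
  apply: K2 => w; rewrite /lowf; case: Rlt_dec => // Hw _.
  apply/RleP; rewrite -RpowE -Rpower_pow //.
  rewrite /Rpower /E.
  have : Rle (Rmult (Rmult (Rmult 3 d) (INR k)) (ln rho)) (Rmult (INR w) (ln rho)) by nra.
  case/Rle_lt_or_eq_dec => [Hlt|->]; last by lra.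
  by apply: Rlt_le; apply: exp_increasing.
rewrite !RpowE (mulnC 3 k) exprM in K1.
move=> K3.
have K4 := le_lt_trans K3 (introT RltP K1).
rewrite -(ltr_nat R) natrX.
rewrite -(ltr_pM2r (introT RltP E0)).
exact: K4.
Qed.
End Real2.

Lemma wt_row_mx m n (a : 'rV['F_2]_m) (b : 'rV['F_2]_n) :
  wt (row_mx a b) = wt a + wt b.
Proof.
rewrite !wtE big_split_ord /=.
by congr (_ + _); apply: eq_bigr => i _; rewrite ?row_mxEl ?row_mxEr.
Qed.

Lemma trans_unit k (y y' : 'rV['F_2]_k) : y != 0%R -> y' != 0%R ->
  exists T, T \in unitmx /\ (y *m T)%R = y'.
Proof.
move=> y0 y'0.
have [i yi] : exists i, y ord0 i != 0%R.
  apply/existsP; apply: contraR y0 => /existsPn H; apply/eqP/matrixP => a b.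
  by rewrite ord1 mxE; move/negPn: (H b) => /eqP.
have yi1 : y ord0 i = 1%R.
  by move: yi; case: (y ord0 i) => [[|[|]]] //= ? _; apply: val_inj.
pose c : 'cV['F_2]_k := delta_mx i ord0.
have yc : (y *m c)%R = 1%R.
  apply/matrixP => a b; rewrite !ord1 !mxE (bigD1 i) //= big1 ?addr0.
    by rewrite mxE !eqxx mulr1 yi1.
  by move=> j ji; rewrite mxE (negbTE ji) mulr0.
have [g gu yg] : {g : 'M_k | g \in unitmx & (y *m (c *m y'))%R = (y *m g)%R}.
  apply: complete_unitmx.
  rewrite mulmxA yc mul1mx.
  have r1 : forall z : 'rV['F_2]_k, z != 0%R -> \rank z = 1.
    move=> z z0; apply/eqP; rewrite eqn_leq rank_leq_row lt0n mxrank_eq0 z0.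
    done.
  by rewrite !r1.
by exists g; split => //; rewrite -yg mulmxA yc mul1mx.
Qed.

Definition cnt k (u y : 'rV['F_2]_k) :=
  #|[set A : 'M['F_2]_k | (A \in unitmx) && ((u *m A)%R == y)]|.

Lemma cnt_le k (u y y' : 'rV['F_2]_k) : y != 0%R -> y' != 0%R -> cnt u y <= cnt u y'.
Proof.
move=> y0 y'0; have [T [Tu yT]] := trans_unit y0 y'0.
rewrite /cnt -(card_imset _ (can_inj (mulmxK Tu))).
apply: subset_leq_card; apply/subsetP => B /imsetP [A].
rewrite !inE => /andP [Au /eqP uA] ->.
by rewrite unitmx_mul Au Tu /= mulmxA uA yT.
Qed.

Lemma cnt_eq k (u y y' : 'rV['F_2]_k) : y != 0%R -> y' != 0%R -> cnt u y = cnt u y'.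
Proof. by move=> y0 y'0; apply/eqP; rewrite eqn_leq !cnt_le. Qed.

Lemma avg_aux k (u : 'rV['F_2]_k) (f : 'rV['F_2]_k -> nat) : u != 0%R ->
  \sum_(A : 'M['F_2]_k | A \in unitmx) f (u *m A)%R = cnt u u * \sum_(y | y != 0%R) f y.
Proof.
move=> u0.
rewrite (partition_big (fun A => (u *m A)%R) (fun y => y != 0%R)); last first.
  move=> A Au; apply: contra u0 => /eqP uA0.
  by rewrite -(mulmxK Au u) uA0 mul0mx.
rewrite big_distrr /=; apply: eq_bigr => y y0.
rewrite (eq_bigr (fun _ => 1 * f y)); last by move=> A /andP [_ /eqP ->]; rewrite mul1n.
rewrite -big_distrl /= sum1dep_card -(cnt_eq u y0 u0); congr (_ * _).
Qed.

Lemma avg k (u : 'rV['F_2]_k) (f : 'rV['F_2]_k -> nat) : u != 0%R ->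
  #|[set y : 'rV['F_2]_k | y != 0%R]| * \sum_(A : 'M['F_2]_k | A \in unitmx) f (u *m A)%R
  = #|[set A : 'M['F_2]_k | A \in unitmx]| * \sum_(y | y != 0%R) f y.
Proof.
move=> u0; have := avg_aux (fun _ => 1) u0.
rewrite !sum1dep_card => ->; rewrite avg_aux //.
by rewrite mulnCA mulnA.
Qed.

Lemma cardN k : #|[set y : 'rV['F_2]_k | y != 0%R]| = (2 ^ k).-1.
Proof.
have -> : [set y : 'rV['F_2]_k | y != 0%R] = [set~ 0%R].
  by apply/setP => y; rewrite !inE.
by rewrite cardsC1 card_mx card_Fp // mul1n.
Qed.

Lemma exists_good k (low : nat -> bool) :
  1 < k ->
  \sum_(u : 'rV['F_2]_k) \sum_(y : 'rV['F_2]_k) \sum_(z : 'rV['F_2]_k)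
     low (wt u + wt y + wt z) < 2 ^ k ->
  exists A B : 'M['F_2]_k, [/\ A \in unitmx, B \in unitmx &
    forall u, u != 0%R -> ~~ low (wt u + wt (u *m A)%R + wt (u *m B)%R)].
Proof.
move=> k1 HT.
set good := fun A B : 'M['F_2]_k =>
  [forall u : 'rV['F_2]_k, (u != 0%R) ==> ~~ low (wt u + wt (u *m A)%R + wt (u *m B)%R)].
case: (boolP [exists A : 'M['F_2]_k, exists B : 'M['F_2]_k,
          [&& A \in unitmx, B \in unitmx & good A B]]).
  case/existsP => A /existsP [B /and3P [Au Bu /forallP G]].
  by exists A, B; split => // u u0; move/implyP: (G u); apply.
move/existsPn => NG; exfalso.
set L := fun (u : 'rV['F_2]_k) (A B : 'M['F_2]_k) =>
  (low (wt u + wt (u *m A)%R + wt (u *m B)%R) : nat).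
set N := #|[set y : 'rV['F_2]_k | y != 0%R]|.
set g := #|[set A : 'M['F_2]_k | A \in unitmx]|.
have S1 : g * g <= \sum_(A | A \in unitmx) \sum_(B | B \in unitmx) \sum_(u | u != 0%R) L u A B.
  have gE : g = \sum_(A : 'M['F_2]_k | A \in unitmx) 1 by rewrite sum1dep_card.
  rewrite {1}gE big_distrl /=; apply: leq_sum => A Au.
  rewrite mul1n gE; apply: leq_sum => B Bu.
  move/existsPn: (NG A) => /(_ B); rewrite Au Bu /= => /forallPn [u].
  rewrite negb_imply negbK => /andP [u0 lu].
  by rewrite (bigD1 u) //= /L lu.
have S2 : \sum_(A | A \in unitmx) \sum_(B | B \in unitmx) \sum_(u | u != 0%R) L u A B
        = \sum_(u | u != 0%R) \sum_(A | A \in unitmx) \sum_(B | B \in unitmx) L u A B.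
  rewrite (eq_bigr (fun A => \sum_(u | u != 0%R) \sum_(B | B \in unitmx) L u A B)).
    by rewrite exchange_big.
  by move=> A _; rewrite exchange_big.
have S3 : forall u : 'rV['F_2]_k, u != 0%R ->
   N * N * \sum_(A | A \in unitmx) \sum_(B | B \in unitmx) L u A B =
   g * g * \sum_(y : 'rV['F_2]_k | y != 0%R) \sum_(z : 'rV['F_2]_k | z != 0%R) (low (wt u + wt y + wt z) : nat).
  move=> u u0.
  rewrite -mulnA big_distrr /=.
  have H1 : forall A : 'M['F_2]_k, N * \sum_(B | B \in unitmx) L u A B =
     g * \sum_(z : 'rV['F_2]_k | z != 0%R) (low (wt u + wt (u *m A)%R + wt z) : nat).
    move=> A; exact: (avg (fun z => (low (wt u + wt (u *m A)%R + wt z) : nat)) u0).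
  rewrite (eq_bigr _ (fun A _ => H1 A)) -big_distrr /= mulnCA.
  rewrite (avg (fun y => \sum_(z : 'rV['F_2]_k | z != 0%R) (low (wt u + wt y + wt z) : nat)) u0).
  by rewrite mulnA.
have S4 : \sum_(u : 'rV['F_2]_k | u != 0%R) \sum_(y : 'rV['F_2]_k | y != 0%R) \sum_(z : 'rV['F_2]_k | z != 0%R) (low (wt u + wt y + wt z) : nat)
    <= \sum_(u : 'rV['F_2]_k) \sum_(y : 'rV['F_2]_k) \sum_(z : 'rV['F_2]_k) (low (wt u + wt y + wt z) : nat).
  rewrite big_mkcond /=; apply: leq_sum => u _; case: ifP => _ //.
  rewrite big_mkcond /=; apply: leq_sum => y _; case: ifP => _ //.
  rewrite big_mkcond /=; apply: leq_sum => z _; case: ifP => _ //.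
have g0 : 0 < g.
  rewrite /g card_gt0; apply/set0Pn; exists 1%:M%R; rewrite inE unitmx1 //.
have NN : 2 ^ k <= N * N.
  rewrite /N cardN.
  have : 2 ^ 2 <= 2 ^ k by rewrite leq_exp2l.
  move: (2 ^ k) => p hp; nia.
have E : N * N * (g * g) <= g * g * \sum_(u : 'rV['F_2]_k) \sum_(y : 'rV['F_2]_k) \sum_(z : 'rV['F_2]_k)
     (low (wt u + wt y + wt z) : nat).
  apply: (leq_trans (leq_mul (leqnn _) S1)); rewrite S2 big_distrr /=.
  rewrite (eq_bigr _ S3) -big_distrr /=.
  by apply: leq_mul.
move: E HT NN g0; set T := \sum_(u : 'rV['F_2]_k) _.
clear -k1; move: T N g => T N g; nia.
Qed.

Section Build.
Variables (k : nat) (A B : 'M['F_2]_k).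
Hypotheses (Au : A \in unitmx) (Bu : B \in unitmx).
Local Notation n := (k + (k + k)).
Definition G0 : 'M['F_2]_(k, n) := row_mx 1%:M%R (row_mx A B).

Lemma G0_wt u : wt (u *m G0)%R = wt u + wt (u *m A)%R + wt (u *m B)%R.
Proof. by rewrite /G0 !mul_mx_row !wt_row_mx mulmx1 addnA. Qed.

Lemma G0_rank : \rank G0 = k.
Proof.
apply/eqP; rewrite eqn_leq rank_leq_row /=.
apply: (@mulmx1_min_rank _ k _ _ G0 1%:M%R (col_mx 1%:M%R 0%R)).
by rewrite mul1mx /G0 mul_row_col mulmx1 mulmx0 addr0.
Qed.

Lemma vsplit (v : 'cV['F_2]_n) :
  v = col_mx (usubmx v) (col_mx (usubmx (dsubmx v)) (dsubmx (dsubmx v))).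
Proof. by rewrite !vsubmxK. Qed.

Lemma G0_mul (v : 'cV['F_2]_n) :
  (G0 *m v)%R = (usubmx v + (A *m usubmx (dsubmx v) + B *m dsubmx (dsubmx v)))%R.
Proof. by rewrite {1}(vsplit v) /G0 !mul_row_col mul1mx. Qed.

Definition S1 : {set 'I_n} := [set x : 'I_n | x < k].
Definition S2 : {set 'I_n} := [set x : 'I_n | k <= x < k + k].
Definition S3 : {set 'I_n} := [set x : 'I_n | k + k <= x].

Lemma u0 (v : 'cV['F_2]_n) : (forall j : 'I_n, j < k -> v j ord0 = 0%R) -> usubmx v = 0%R.
Proof. by move=> H; apply/matrixP => i j; rewrite !mxE ord1 H //= ltn_ord. Qed.
Lemma u20 (v : 'cV['F_2]_n) : (forall j : 'I_n, k <= j < k + k -> v j ord0 = 0%R) ->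
  usubmx (dsubmx v) = 0%R.
Proof.
move=> H; apply/matrixP => i j; rewrite !mxE ord1 H //=.
by rewrite leq_addr /= ltn_add2l ltn_ord.
Qed.
Lemma d20 (v : 'cV['F_2]_n) : (forall j : 'I_n, k + k <= j -> v j ord0 = 0%R) ->
  dsubmx (dsubmx v) = 0%R.
Proof. by move=> H; apply/matrixP => i j; rewrite !mxE ord1 H //= addnA leq_addr. Qed.

Lemma cardS1 : #|S1| = k.
Proof.
have -> : S1 = [set lshift (k + k) i | i : 'I_k].
  apply/setP => x; rewrite !inE; apply/idP/imsetP => [xk | [i _ ->] //=].
  by exists (Ordinal xk) => //; apply: val_inj.
by rewrite card_imset ?card_ord //; exact: lshift_inj.
Qed.
Lemma cardS2 : #|S2| = k.
Proof.
have -> : S2 = [set rshift k (lshift k i) | i : 'I_k].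
  apply/setP => x; rewrite !inE; apply/idP/imsetP => [/andP [h1 h2] | [i _ ->] /=].
    have h : x - k < k by lia.
    by exists (Ordinal h) => //; apply: val_inj => /=; lia.
  by rewrite leq_addr /= ltn_add2l ltn_ord.
rewrite card_imset ?card_ord // => i j /rshift_inj; exact: lshift_inj.
Qed.
Lemma cardS3 : #|S3| = k.
Proof.
have -> : S3 = [set rshift k (rshift k i) | i : 'I_k].
  apply/setP => x; rewrite !inE; apply/idP/imsetP => [h1 | [i _ ->] /=].
    have h : x - (k + k) < k by have := ltn_ord x; lia.
    by exists (Ordinal h) => //; apply: val_inj => /=; lia.
  by rewrite addnA leq_addr.
rewrite card_imset ?card_ord // => i j /rshift_inj; exact: rshift_inj.
Qed.

Lemma G0_cis3 : cis3 G0.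
Proof.
exists S1, S2, S3; split.
- by rewrite -setI_eq0; apply/eqP/setP => x; rewrite !inE; lia.
- by rewrite -setI_eq0; apply/eqP/setP => x; rewrite !inE; lia.
- by rewrite -setI_eq0; apply/eqP/setP => x; rewrite !inE; lia.
- by apply/setP => x; rewrite !inE; lia.
- split; split.
  + exact: cardS1.
  + move=> v H.
    have h2 : usubmx (dsubmx v) = 0%R by apply: u20 => j hj; apply: H; rewrite inE; lia.
    have h3 : dsubmx (dsubmx v) = 0%R by apply: d20 => j hj; apply: H; rewrite inE; lia.
    rewrite G0_mul h2 h3 !mulmx0 !addr0 => E.
    by rewrite (vsplit v) h2 h3 E !col_mx0.
  + exact: cardS2.
  + move=> v H.
    have h1 : usubmx v = 0%R by apply: u0 => j hj; apply: H; rewrite inE; lia.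
    have h3 : dsubmx (dsubmx v) = 0%R by apply: d20 => j hj; apply: H; rewrite inE; lia.
    rewrite G0_mul h1 h3 mulmx0 !add0r addr0 => E.
    have h2 : usubmx (dsubmx v) = 0%R by rewrite -(mulKmx Au (usubmx (dsubmx v))) E mulmx0.
    by rewrite (vsplit v) h1 h2 h3 !col_mx0.
  + exact: cardS3.
  + move=> v H.
    have h1 : usubmx v = 0%R by apply: u0 => j hj; apply: H; rewrite inE; lia.
    have h2 : usubmx (dsubmx v) = 0%R by apply: u20 => j hj; apply: H; rewrite inE; lia.
    rewrite G0_mul h1 h2 mulmx0 !add0r => E.
    have h3 : dsubmx (dsubmx v) = 0%R by rewrite -(mulKmx Bu (dsubmx (dsubmx v))) E mulmx0.
    by rewrite (vsplit v) h1 h2 h3 !col_mx0.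
Qed.
End Build.

Theorem proposition3 (delta : R) :
  Rle 0 delta -> Rle delta (Rdiv 1 2) -> Rlt (Hbin delta) (Rdiv 1 3) ->
  exists K : nat, forall k : nat, (K <= k)%N ->
    exists G : 'M['F_2]_(k, 3 * k),
      \rank G = k /\ cis3 G /\ min_dist_ge G (Rmult (Rmult 3 delta) (INR k)).
Proof.
move=> h0 h1 hH; exists 2 => k hk.
have k0 : (0 < k)%N by apply: leq_trans hk.
have [A [B [Au Bu HG]]] := exists_good hk (Tbound h0 h1 hH k0).
have H : forall n (e : (k + (k + k))%N = n), exists G : 'M['F_2]_(k, n),
    \rank G = k /\ cis3 G /\ min_dist_ge G (Rmult (Rmult 3 delta) (INR k)).
  move=> n e; case: n / e.
  exists (G0 A B); split; first exact: G0_rank.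
  split; first exact: G0_cis3.
  move=> u u0; rewrite G0_wt; move: (HG u u0); rewrite /lowf.
  by case: Rlt_dec => // Hl _; apply: Rnot_lt_le.
apply: H; lia.
Qed.
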